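(* Let $s\geq 1$ and $t\geq 3$ be integers and $\delta>0$. Let $G$ be a bipartite graph with bipartition $A\cup B$, $|B|=n$, containing no copy of $L'_{s,t}$ as a subgraph, such that every vertex of $A$ has degree at least $\delta$ in $G$. Then for every subset $U\subseteq A$ with $|U|\geq \frac{8(s+t)n}{\delta}$ and $|U|\geq 2$, the number of light edges of $W_G$ with both endpoints in $U$ is at least $\frac{\delta^2}{8(s+t)^3 n}\binom{|U|}{2}$.
   Context: For a bipartite graph $G$ with bipartition $A\cup B$, write $d_G(u,v)=|N_G(u)\cap N_G(v)|$ for $u,v\in A$, where $N_G(x)$ is the neighbourhood of $x$ in $G$. The neighbourhood graph $W_G$ is the weighted graph on $A$ where the pair $uv$ has weight $d_G(u,v)$. A pair $uv$ of distinct vertices of $A$ is a light edge if $1\leq d_G(u,v)<\binom{s+t-1}{2}$. The subdivision of a graph $L$ is the bipartite graph with parts $V(L)$ and $E(L)$ in which $v\in V(L)$ is adjacent to $e\in E(L)$ iff $v$ is an endpoint of $e$. $L_{s,t}$ is the graph on vertex set $S\cup T$, $S\cap T=\emptyset$, $|S|=s$, $|T|=t-1$, where distinct $x,y$ are adjacent iff $x\in T$ or $y\in T$; $L'_{s,t}$ is its subdivision. *)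

(* Defs.v *)
From HB Require Import structures.
From mathcomp Require Import all_boot all_order all_algebra.
Set Implicit Arguments. Unset Strict Implicit. Unset Printing Implicit Defensive.

(* A (simple) graph is a finType of vertices with a relation.
   [contains_copy h g] : there is an injective map from the vertices of H
   into the vertices of G sending edges to edges (a copy of H as a
   (not necessarily induced) subgraph of G). *)
Definition contains_copy (VH VG : finType) (h : rel VH) (g : rel VG) : Prop :=
  exists f : VH -> VG, injective f /\ (forall x y, h x y -> g (f x) (f y)).

Definition bip_graph (A B : finType) (adj : A -> B -> bool) : rel (A + B)%type :=
  fun x y => match x, y with
             | inl a, inr b => adj a b
             | inr b, inl a => adj a b
             | _, _ => false
             end.

Definition is_edge_set (V : finType) (e : rel V) (E : {set V}) : bool :=
  [exists x, exists y, [&& x != y, e x y & E == [set x; y]]].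

Definition edge_type (V : finType) (e : rel V) : finType :=
  {E : {set V} | is_edge_set e E}.

Definition subdiv_adj (V : finType) (e : rel V) : V -> edge_type e -> bool :=
  fun v E => v \in val E.

Definition subdivision (V : finType) (e : rel V) : rel (V + @edge_type V e)%type :=
  bip_graph (@subdiv_adj V e).

(* L_{s,t}: vertex set S (size s) + T (size t-1); distinct x,y adjacent iff
   x \in T or y \in T. *)
Definition Lst_vert (s t : nat) : finType := ('I_s + 'I_(t.-1))%type.

Definition is_T (s t : nat) (x : Lst_vert s t) : bool :=
  if x is inr _ then true else false.

Definition Lst (s t : nat) : rel (Lst_vert s t) :=
  fun x y => (x != y) && (@is_T s t x || @is_T s t y).

Arguments Lst s t : clear implicits.
Arguments is_T s t x : clear implicits.

Definition Lst' (s t : nat) := @subdivision (Lst_vert s t) (Lst s t).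
Arguments Lst' s t : clear implicits.

Definition codeg (A B : finType) (adj : A -> B -> bool) (u v : A) : nat :=
  #|[set b | adj u b && adj v b]|.

Definition degA (A B : finType) (adj : A -> B -> bool) (u : A) : nat :=
  #|[set b | adj u b]|.

Definition light (s t : nat) (A B : finType) (adj : A -> B -> bool) (u v : A) : bool :=
  [&& u != v, 1 <= codeg adj u v & codeg adj u v < 'C(s + t - 1, 2)].

Arguments light s t {A B} adj u v.

Definition light_edges_in (s t : nat) (A B : finType) (adj : A -> B -> bool)
  (U : {set A}) : {set {set A}} :=
  [set E : {set A} | (E \subset U) &&
     [exists u, exists v, (E == [set u; v]) && light s t adj u v]].

Arguments light_edges_in s t {A B} adj U.

(* Main.v *)
Require Import Defs.
From HB Require Import structures.
From mathcomp Require Import all_boot all_order all_algebra.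
From mathcomp Require Import zify ring lra.
Set Implicit Arguments. Unset Strict Implicit. Unset Printing Implicit Defensive.

Lemma greedy_seq (I B : finType) (C : I -> {set B}) k (b0 : B) (l : seq I) :
  uniq l -> size l <= k -> (forall i, k <= #|C i|) ->
  exists h : I -> B, {in l &, injective h} /\ {in l, forall i, h i \in C i}.
Proof.
move=> + + HC; elim: l => [|i l IH] /=.
  by move=> _ _; exists (fun _ => b0); split.
move=> /andP[il ul] sl.
have [h [hinj hC]] := IH ul (ltnW sl).
have Hlt : #|h @: [set x in l]| < #|C i|.
  apply: leq_trans (HC i); apply: leq_ltn_trans (leq_imset_card _ _) _.
  by rewrite cardsE (card_uniqP ul).
have : ~~ (C i \subset h @: [set x in l]).
  by apply/negP => /subset_leq_card; rewrite leqNgt Hlt.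
case/subsetPn => x xC xH.
exists (fun j => if j == i then x else h j); split.
  move=> a b; rewrite !inE => /orP[/eqP->|al] /orP[/eqP->|bl] //=; rewrite ?eqxx.
  - case: eqP => [-> //|_] ex; case/negP: xH; rewrite ex; apply/imsetP.
    by exists b; rewrite ?inE.
  - case: eqP => [//|_].
    move=> ex; case/negP: xH; rewrite -ex; apply/imsetP.
    by exists a; rewrite ?inE.
  - case: eqP => [ea|_]; first by move: il; rewrite -ea al.
    case: eqP => [eb|_]; first by move: il; rewrite -eb bl.
    exact: hinj.
move=> j; rewrite inE => /orP[/eqP->|jl]; first by rewrite eqxx.
case: eqP => [->|_]; [by []| exact: hC].
Qed.

Lemma greedy (I B : finType) (C : I -> {set B}) k (b0 : B) :
  #|I| <= k -> (forall i, k <= #|C i|) ->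
  exists h : I -> B, injective h /\ forall i, h i \in C i.
Proof.
move=> HI HC.
have Hs : size (enum I) <= k by rewrite -cardE.
have [h [hinj hC]] := greedy_seq b0 (enum_uniq I) Hs HC.
exists h; split; last by move=> i; apply: hC; rewrite mem_enum.
by move=> a b; apply: hinj; rewrite mem_enum.
Qed.

Lemma card_edge_type (V : finType) (e : rel V) : #|edge_type e| <= 'C(#|V|, 2).
Proof.
rewrite /edge_type card_sig -card_draws; apply: subset_leq_card.
apply/subsetP => E; rewrite !inE => /existsP[x] /existsP[y] /and3P[xy _ /eqP->].
by rewrite cards2 xy.
Qed.

Lemma embed s t (A B : finType) (adj : A -> B -> bool) (g : Lst_vert s t -> A) (b0 : B) :
  1 <= t -> injective g ->
  (forall x y, x != y -> 'C(s+t-1,2) <= codeg adj (g x) (g y)) ->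
  contains_copy (Lst' s t) (bip_graph adj).
Proof.
move=> t1 ginj Hg.
pose C (E : edge_type (Lst s t)) := [set b | [forall v in val E, adj (g v) b]].
have HV : #|Lst_vert s t| = s + t - 1 by rewrite card_sum !card_ord; lia.
have HC : forall E, 'C(s+t-1,2) <= #|C E|.
  move=> [E /= HE]; have := HE; move/existsP => [x] /existsP[y] /and3P[xy _ /eqP EE].
  apply: leq_trans (Hg x y xy) _; apply: subset_leq_card.
  apply/subsetP => b; rewrite !inE /= => /andP[hx hy].
  apply/forall_inP => v; rewrite EE !inE => /orP[] /eqP-> //.
have [h [hinj hC]] := greedy b0 (k := 'C(s+t-1,2)) (C := C)
  (ltac:(by rewrite -HV; apply: card_edge_type)) HC.
exists (fun x => match x with inl v => inl (g v) | inr E => inr (h E) end).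
split.
  by move=> [a|a] [b|b] //= [] /=; [move/ginj-> | move/hinj->].
move=> [a|a] [b|b] //=; rewrite /subdiv_adj.
  by move=> ab; move: (hC b); rewrite inE => /forall_inP; apply.
by move=> ab; move: (hC a); rewrite inE => /forall_inP; apply.
Qed.
Lemma amgm x y : 2 * (x * y) <= x ^ 2 + y ^ 2.
Proof. have := (nat_AGM2 x y).1; rewrite sqrnD. lia. Qed.

Lemma arith_cw m a b Q E : 1 <= m -> (m.-1) * Q >= a ^ 2 -> E + a + b >= Q + b ^ 2 ->
  (a + b) ^ 2 <= m * (E + (a + b)).
Proof.
move=> m1 h1 h2.
have -> : m = (m.-1).+1 by rewrite prednK.
move: h1; set p := m.-1 => h1.
have h3 : p * (a + b) ^ 2 <= p * (p.+1 * (Q + b ^ 2)).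
  have := amgm (p*b) a; nia.
case: p h1 h3 => [|p] h1 h3; first by nia.
have : (a + b) ^ 2 <= p.+2 * (Q + b ^ 2) by rewrite leq_pmul2l in h3.
nia.
Qed.

Lemma caro_wei (T : finType) (F : rel T) : symmetric F -> irreflexive F ->
 forall m (X : {set T}),
 (forall S : {set T}, S \subset X -> {in S &, forall x y, ~~ F x y} -> #|S| <= m) ->
 #|X| ^ 2 <= m * (\sum_(x in X) #|[set y in X | F x y]| + #|X|).
Proof.
move=> Fs Fi m X; have [n] := ubnP #|X|; elim: n m X => // n IH m X ltX Hind.
have [->|/set0Pn [v0 v0X]] := eqVneq X set0; first by rewrite cards0.
pose deg x := #|[set y in X | F x y]|.
have [v vX vmin] : exists2 v, v \in X & forall x, x \in X -> deg v <= deg x.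
  by case: (arg_minnP deg v0X) => v vX vmin; exists v.
pose N := [set y in X | F v y]; pose R := v |: N; pose X' := X :\: R.
have RX : R \subset X.
  by apply/subsetP => x; rewrite !inE => /orP[/eqP->|/andP[]].
have vN : v \notin N by rewrite inE Fi andbF.
have cR : #|R| = (deg v).+1 by rewrite cardsU1 vN.
have cX : #|X| = #|X'| + #|R|.
  rewrite cardsD (setIidPr RX); have := subset_leq_card RX; lia.
have m1 : 1 <= m.
  apply: leq_trans (Hind [set v0] _ _); first by rewrite cards1.
    by rewrite sub1set.
  by move=> x y; rewrite !inE => /eqP-> /eqP->; rewrite Fi.
have Hind' : forall S : {set T}, S \subset X' -> {in S &, forall x y, ~~ F x y} -> #|S| <= m.-1.
  move=> S SX' Sind.
  have vS : v \notin S.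
    by apply/negP => /(subsetP SX'); rewrite !inE eqxx.
  have : #|v |: S| <= m.
    apply: Hind.
      apply/subsetP => x; rewrite !inE => /orP[/eqP->//|/(subsetP SX')].
      by rewrite !inE => /andP[].
    have key : forall y, y \in S -> ~~ F v y.
      move=> y /(subsetP SX'); rewrite !inE.
      by case: (F v y); case: (y \in X); rewrite /= ?orbT ?andbF.
    move=> x y; rewrite !inE => /orP[/eqP->|xS] /orP[/eqP->|yS].
    - by rewrite Fi.
    - exact: key.
    - by rewrite Fs; apply: key.
    - exact: Sind.
  by rewrite cardsU1 vS; lia.
have ltX' : #|X'| < n by lia.
have IH' := IH m.-1 X' ltX' Hind'.
pose E := \sum_(x in X) #|[set y in X | F x y]|.
pose E' := \sum_(x in X') #|[set y in X' | F x y]|.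
have HE : E' + #|R| * deg v <= E.
  rewrite /E (big_setID R) /= (setIidPr RX) /E' [X in _ <= X]addnC; apply: leq_add.
    apply: leq_sum => x _; apply: subset_leq_card; apply/subsetP => y.
    by rewrite !inE => /andP[/andP[_ ->] ->].
  rewrite -sum_nat_const; apply: leq_sum => x xR; apply: vmin.
  exact: (subsetP RX).
rewrite -/E cX; apply: (arith_cw (Q := E' + #|X'|)) => //.
rewrite cR; nia.
Qed.
Lemma card_sum_ind (T : finType) (A : {pred T}) (P : pred T) :
  #|[set x in A | P x]| = \sum_(x in A) P x.
Proof.
rewrite -sum1_card big_mkcond [RHS]big_mkcond; apply: eq_bigr => x _.
by rewrite !inE; case: (x \in A); case: (P x).
Qed.
Lemma count_light s t (A B : finType) (adj : A -> B -> bool) (U : {set A}) :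
  \sum_(a in U) #|[set a' in U | light s t adj a a']| <= 2 * #|light_edges_in s t adj U|.
Proof.
set LE := light_edges_in s t adj U.
have step : forall a, a \in U ->
   #|[set a' in U | light s t adj a a']| <= #|[set E in LE | a \in E]|.
  move=> a aU.
  rewrite -(@card_in_imset _ _ (fun a' => [set a; a']) [set a' in U | light s t adj a a']).
    apply: subset_leq_card; apply/subsetP => z /imsetP[a' ]; rewrite !inE.
    move=> /andP[a'U la] ->; rewrite !inE eqxx andbT.
    apply/andP; split.
      by apply/subsetP => w; rewrite !inE => /orP[] /eqP->.
    by apply/existsP; exists a; apply/existsP; exists a'; rewrite eqxx.
  move=> x y; rewrite !inE => /andP[_ lx] /andP[_ ly] exy.
  have : y \in [set a; x] by rewrite exy !inE eqxx orbT.
  rewrite !inE => /orP[/eqP ya|/eqP->//].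
  by move: ly; rewrite ya /light eqxx.
apply: (@leq_trans (\sum_(a in U) #|[set E in LE | a \in E]|)).
  by apply: leq_sum => a aU; apply: step.
apply: (@leq_trans (\sum_a #|[set E in LE | a \in E]|)).
  by rewrite [X in _ <= X](bigID (fun a => a \in U)) /= leq_addr.
under eq_bigr => a _ do rewrite card_sum_ind.
rewrite exchange_big /= mulnC -sum_nat_const; apply: eq_leq; apply: eq_bigr => E.
rewrite inE => /andP[_ /existsP[u] /existsP[v] /andP[/eqP-> /and3P[uv _ _]]].
rewrite -card_sum_ind; have -> : [set x in xpredT | x \in [set u; v]] = [set u; v] by apply/setP => x; rewrite !inE.
by rewrite cards2 uv.
Qed.
Lemma card_sum_ind' (T : finType) (P : pred T) :
  #|[set x | P x]| = \sum_x P x.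
Proof.
have -> : [set x | P x] = [set x in predT | P x] by apply/setP => x; rewrite !inE.
by rewrite card_sum_ind.
Qed.

Lemma sum_in_set (T : finType) (U : {set T}) (P : pred T) (f : T -> nat) :
  \sum_(a in [set a in U | P a]) f a = \sum_(a in U) P a * f a.
Proof.
rewrite big_mkcond [RHS]big_mkcond; apply: eq_bigr => x _; rewrite !inE.
by case: (x \in U); case: (P x); rewrite ?mul1n ?mul0n.
Qed.

Definition Fh s t (A B : finType) (adj : A -> B -> bool) (a a' : A) : bool :=
  (a != a') && (codeg adj a a' < 'C(s + t - 1, 2)).

Definition Eb s t (A B : finType) (adj : A -> B -> bool) (U : {set A}) (b : B) : nat :=
  \sum_(a in [set a in U | adj a b])
     #|[set a' in [set a in U | adj a b] | Fh s t adj a a']|.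

Lemma sum_deg (A B : finType) (adj : A -> B -> bool) (U : {set A}) :
  \sum_b #|[set a in U | adj a b]| = \sum_(a in U) degA adj a.
Proof.
under eq_bigr => b _ do rewrite card_sum_ind.
rewrite exchange_big /=; apply: eq_bigr => a _.
by rewrite /degA card_sum_ind'.
Qed.

Lemma sum_Eb s t (A B : finType) (adj : A -> B -> bool) (U : {set A}) :
  \sum_b Eb s t adj U b <= ('C(s+t-1,2)).-1 * \sum_(a in U) #|[set a' in U | light s t adj a a']|.
Proof.
have -> : \sum_b Eb s t adj U b =
   \sum_b \sum_(a in U) \sum_(a' in U) ((adj a b && adj a' b) && Fh s t adj a a').
  apply: eq_bigr => b _; rewrite /Eb sum_in_set; apply: eq_bigr => a aU.
  rewrite card_sum_ind sum_in_set big_distrr /=; apply: eq_bigr => a' _.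
  by case: (adj a b); case: (adj a' b); case: (Fh _ _ _ _ _).
rewrite exchange_big big_distrr /=; apply: leq_sum => a aU.
rewrite exchange_big card_sum_ind big_distrr /=; apply: leq_sum => a' a'U.
have -> : \sum_b ((adj a b && adj a' b) && Fh s t adj a a') =
          Fh s t adj a a' * codeg adj a a'.
  rewrite /codeg card_sum_ind' big_distrr /=; apply: eq_bigr => b _.
  by case: (adj a b); case: (adj a' b); case: (Fh _ _ _ _ _).
rewrite /Fh /light; case: (a != a') => //=.
set c := codeg adj a a'; set C := 'C(_, 2).
case: (ltnP c C) => h; rewrite ?andbF ?mul0n //= ?andbT mul1n.
case: c h => [|c] h //=; rewrite muln1; lia.
Qed.
Lemma per_b s t (A B : finType) (adj : A -> B -> bool) (U : {set A}) (b : B) :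
  1 <= s -> 3 <= t -> ~ contains_copy (Lst' s t) (bip_graph adj) ->
  #|[set a in U | adj a b]| ^ 2 <= 2 * (s + t - 2) * Eb s t adj U b + (s + t - 2) ^ 2.
Proof.
move=> s1 t3 nc.
set X := [set a in U | adj a b]; set m := s + t - 2.
have Fs : symmetric (Fh s t adj).
  move=> x y; rewrite /Fh eq_sym /codeg.
  by have -> : [set b0 | adj x b0 && adj y b0] = [set b0 | adj y b0 && adj x b0]
    by apply/setP => z; rewrite !inE andbC.
have Fi : irreflexive (Fh s t adj) by move=> x; rewrite /Fh eqxx.
have := @caro_wei _ _ Fs Fi m X.
have Hind : forall S : {set A}, S \subset X ->
    {in S &, forall x y, ~~ Fh s t adj x y} -> #|S| <= m.
  move=> S SX Sind; rewrite leqNgt; apply/negP => ltS.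
  have le : #|Lst_vert s t| <= #|S| by rewrite card_sum !card_ord; lia.
  pose g (v : Lst_vert s t) := enum_val (widen_ord le (enum_rank v)).
  have ginj : injective g.
    move=> x y /enum_val_inj /(congr1 val) /= /val_inj /enum_rank_inj //.
  apply: nc; apply: (embed (g := g) b) => //; first by lia.
  move=> x y xy.
  have gxS : g x \in S by apply: enum_valP.
  have gyS : g y \in S by apply: enum_valP.
  have := Sind _ _ gxS gyS; rewrite /Fh.
  have -> : (g x != g y) by apply: contra xy => /eqP /ginj ->.
  by rewrite /= -leqNgt.
move=> /(_ Hind); rewrite /Eb -/X.
set E := \sum_(x in X) _ => h.
have := amgm m #|X|; nia.
Qed.

Import Order.TTheory GRing.Theory Num.Theory.
Local Open Scope ring_scope.

Lemma real_final (R : realFieldType) (Y P L K Sc M2 c d u : R) :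
  0 < Y -> 0 <= L -> 0 <= K -> 0 < Sc -> 0 <= M2 -> M2 <= Sc ^+ 2 ->
  K <= 2 * Sc ^+ 3 -> 8 * Sc * Y <= P -> P ^+ 2 <= Y * (K * L + Y * M2) ->
  2 * c <= u ^+ 2 -> P = u * d -> 0 < d ->
  d ^+ 2 / (8 * Sc ^+ 3 * Y) * c <= L.
Proof.
move=> Y0 L0 K0 S0 M0 MS KS SP HP cu Pud d0.
have D0 : 0 < 8 * Sc ^+ 3 * Y by rewrite !mulr_gt0 // exprn_gt0.
rewrite mulrAC ler_pdivrMr //.
have h1 : 64 * (Y * Y * M2) <= P ^+ 2.
  have : 64 * (Y * Y * M2) <= (8 * Sc * Y) ^+ 2 by nra.
  move=> h; apply: le_trans h _; rewrite ler_sqr ?nnegrE //; nra.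
have h2 : d ^+ 2 * c * 2 <= P ^+ 2.
  have h := ler_wpM2r (sqr_ge0 d) cu; rewrite Pud exprMn.
  apply: le_trans h; rewrite mulrC mulrA; lra.
have h3 : 63 * P ^+ 2 <= 64 * (Y * K * L).
  rewrite mulrDr !mulrA in HP; lra.
have h4 : Y * K * L <= Y * (2 * Sc ^+ 3) * L.
  exact: (ler_wpM2r L0 (ler_wpM2l (ltW Y0) KS)).
nra.
Qed.

Import Order.TTheory GRing.Theory Num.Theory.
Local Open Scope ring_scope.

Lemma two_bin2 (u : nat) : (2 * 'C(u, 2) <= u * u.-1)%N.
Proof. rewrite bin2 mul2n; have := odd_double_half (u * u.-1); lia. Qed.

Lemma cu_nat u : (2 * 'C(u, 2) <= u ^ 2)%N.
Proof. have := two_bin2 u; nia. Qed.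

Lemma MS_nat s t : ((s + t - 2) ^ 2 <= (s + t) ^ 2)%N.
Proof. by rewrite leq_exp2r // leq_subr. Qed.

Lemma KS_nat s t : (4 * (s + t - 2) * ('C(s + t - 1, 2)).-1 <= 2 * (s + t) ^ 3)%N.
Proof.
have := two_bin2 (s + t - 1); set C := 'C(_, 2).
have -> : ((s + t - 1).-1 = s + t - 2)%N by lia.
set m := (s + t - 2)%N => h.
have : (4 * m * C.-1 <= 2 * m * ((s + t - 1) * m))%N by nia.
move=> h'; apply: leq_trans h' _; rewrite /m; nia.
Qed.

Lemma natr_den (R : realFieldType) (s t n : nat) :
  (8 * (s + t) ^ 3 * n)%:R = 8 * (s + t)%:R ^+ 3 * n%:R :> R.
Proof. by rewrite natrM natrM natrX. Qed.

Unset Implicit Arguments.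
Set Strict Implicit.

Theorem corollary11 (R : realFieldType) (s t : nat) (delta : R)
  (A B : finType) (adj : A -> B -> bool) :
  (1 <= s)%N -> (3 <= t)%N -> 0 < delta ->
  ~ contains_copy (Lst' s t) (bip_graph adj) ->
  (forall a : A, delta <= (degA adj a)%:R) ->
  forall U : {set A},
    (8 * (s + t) * #|B|)%:R / delta <= (#|U|)%:R ->
    (2 <= #|U|)%N ->
    delta ^+ 2 / (8 * (s + t) ^ 3 * #|B|)%:R * ('C(#|U|, 2))%:R
      <= (#|light_edges_in s t adj U|)%:R.
Proof.
move=> s1 t3 d0 nc Hdeg U HU HU2.
set n := #|B|; set u := #|U|; set m := (s + t - 2)%N; set C := 'C(s + t - 1, 2).
set L := #|light_edges_in s t adj U|.
pose d b := #|[set a in U | adj a b]|.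
have Hb : forall b, (d b ^ 2 <= 2 * m * Eb s t adj U b + m ^ 2)%N.
  by move=> b; apply: per_b.
have HE : (\sum_b Eb s t adj U b <= C.-1 * (2 * L))%N.
  apply: leq_trans (sum_Eb _ _ _ _) _.
  by apply: leq_mul => //; apply: count_light.
have HD := sum_deg adj U.
have [a0 a0U] : exists a, a \in U.
  by apply/set0Pn; rewrite -card_gt0 -/u; lia.
have Y0 : 0 < n%:R :> R.
  apply: lt_le_trans d0 (le_trans (Hdeg a0) _); rewrite ler_nat.
  exact: max_card.
set Y := n%:R : R.
set P := u%:R * delta.
have PD : P <= (\sum_(a in U) degA adj a)%:R.
  rewrite natr_sum /P mulr_natl -sumr_const; apply: ler_sum => a _; exact: Hdeg.
pose lam := P / Y.
have lam0 : 0 <= lam.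
  by apply: divr_ge0; [apply: mulr_ge0; [exact: ler0n | exact: ltW] | exact: ltW].
have Hsum : 2 * lam * (\sum_b d b)%:R - lam ^+ 2 *+ n
    <= (2 * m * \sum_b Eb s t adj U b + n * m ^ 2)%N%:R.
  rewrite natr_sum mulr_sumr -sumr_const -sumrB.
  have -> : (2 * m * \sum_b Eb s t adj U b + n * m ^ 2)%N =
            (\sum_b (2 * m * Eb s t adj U b + m ^ 2))%N.
    by rewrite big_split /= sum_nat_const big_distrr /=; congr (_ + _ * _); apply: eq_card.
  rewrite natr_sum; apply: ler_sum => b _.
  have := Hb b; rewrite -(ler_nat R) natrX => h; apply: le_trans h.
  have := sqr_ge0 ((d b)%:R - lam); nra.
have HP : P ^+ 2 <= Y * ((4 * m * C.-1)%:R * L%:R + Y * (m ^ 2)%:R).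
  have h1 : (2 * m * \sum_b Eb s t adj U b + n * m ^ 2)%N%:R
      <= (4 * m * C.-1)%:R * L%:R + Y * (m ^ 2)%:R :> R.
    rewrite -natrM -natrM -natrD ler_nat.
    have := leq_mul (leqnn (2 * m)) HE; lia.
  have h2 := le_trans Hsum h1.
  rewrite HD in h2.
  have h3 : 2 * lam * P - lam ^+ 2 *+ n <= Y * ((4 * m * C.-1)%:R * L%:R + Y * (m ^ 2)%:R) / Y.
    rewrite [X in _ <= X]mulrC mulKf ?gt_eqF //; apply: le_trans h2.
    by rewrite lerD2r ler_wpM2l // mulr_ge0.
  have h4 : 2 * lam * P - lam ^+ 2 *+ n = P ^+ 2 / Y.
    rewrite -mulr_natr -/Y /lam; field; rewrite gt_eqF //.
  by rewrite h4 ler_pM2r ?invr_gt0 // in h3.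
have H8 : 8%:R * (s + t)%:R * Y <= P.
  by rewrite -!natrM /P -ler_pdivrMr.
have cu : 2 * ('C(u, 2))%:R <= u%:R ^+ 2 :> R.
  by rewrite -natrX -(natrM R 2) ler_nat cu_nat.
have KS : (4 * m * C.-1)%:R <= 2 * (s + t)%:R ^+ 3 :> R.
  by rewrite -natrX -(natrM R 2) ler_nat KS_nat.
have MS : (m ^ 2)%:R <= (s + t)%:R ^+ 2 :> R.
  by rewrite -natrX ler_nat MS_nat.
have := @real_final R Y P L%:R _ (s + t)%:R _ _ delta u%:R Y0 (ler0n _ _) (ler0n _ _)
   _ (ler0n _ _) MS KS H8 HP cu erefl d0.
rewrite natr_den.
by apply; rewrite ltr0n addn_gt0 s1.
Qed.
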